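(* Let $\mathbb{F}$ be any field and $\mathcal{H}=(Q_0,Q_1,\beta)$ a directed tensor-labeled hypergraph following a single standard construction. Then $\delta(\mathcal{H})=0$. In particular $\dim_{\mathbb{F}}\mathcal{Z}(\mathcal{H})=|Q_1|-|V_{\mathrm{macro}}|+c_{\mathrm{macro}}$.
   Context: $Q_0,Q_1$ finite; $T(\mathbb{F}^{Q_0})=\bigoplus_{k\ge0}(\mathbb{F}^{Q_0})^{\otimes k}$, with $v\in Q_0$ identified with $\mathbf{1}_v$ and $1$ the unit of $T^0=\mathbb{F}$. A directed tensor-labeled hypergraph is $\mathcal{H}=(Q_0,Q_1,\beta)$ with $\beta:\mathbb{F}^{Q_1}\to T(\mathbb{F}^{Q_0})\times T(\mathbb{F}^{Q_0})$ linear, $\beta(\mathbf{1}_e)=(A_e,B_e)$. $\partial_\beta:\mathbb{F}^{Q_1}\to T(\mathbb{F}^{Q_0})$, $\mathbf{1}_e\mapsto B_e-A_e$; $\mathcal{Z}(\mathcal{H})=\mathrm{Ker}\,\partial_\beta$. $V_{\mathrm{macro}}=\{A_e\}\cup\{B_e\}$; $\mathcal{H}_{\mathrm{macro}}$ is the directed multigraph on $V_{\mathrm{macro}}$ with edges $Q_1$, $e:A_e\to B_e$; $c_{\mathrm{macro}}$ its number of weakly connected components; $B_{\mathrm{macro}}:\mathbb{F}^{Q_1}\to\mathbb{F}^{V_{\mathrm{macro}}}$, $\mathbf{1}_e\mapsto\mathbf{1}_{B_e}-\mathbf{1}_{A_e}$; $\hat\phi:\mathbb{F}^{V_{\mathrm{macro}}}\to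 T(\mathbb{F}^{Q_0})$, $\mathbf{1}_w\mapsto w$; $\delta(\mathcal{H})=\dim(\mathrm{Im}B_{\mathrm{macro}}\cap\mathrm{Ker}\hat\phi)$. $\mathrm{Sym}_k(m_1\otimes\cdots\otimes m_k)=\sum_{\sigma\in S_k}m_{\sigma(1)}\otimes\cdots\otimes m_{\sigma(k)}$. Standard constructions: (1) $\psi:Q_1\to2^{Q_0}$, $1\le|\psi(e)|\le2$, $\beta(e)=(2(v\otimes v),1)$ if $\psi(e)=\{v\}$, $(u\otimes v+v\otimes u,1)$ if $\psi(e)=\{u,v\}$, $u\neq v$; (2) $s,t:Q_1\to Q_0$, $\beta(e)=(s(e),t(e))$; (3) multiset $\{\!\{u_1,\dots,u_k\}\!\}$, $k\ge1$, $\beta(e)=(\mathrm{Sym}_k(u_1\otimes\cdots\otimes u_k),1)$; (4) tuple $(u_1,\dots,u_k)$, $k\ge1$, $\beta(e)=(u_1\otimes\cdots\otimes u_k,1)$; (5) multisets of sizes $p,q\ge1$, $\beta(e)=(\mathrm{Sym}_p(u_1\otimes\cdots\otimes u_p),\mathrm{Sym}_q(v_1\otimes\cdots\otimes v_q))$; (6) tuples, $\beta(e)=(u_1\otimes\cdots\otimes u_p,w_1\otimes\cdots\otimes w_q)$, $p,q\ge1$. ''Single standard construction'': all hyperedges given by the same one of (1)–(6). *)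

(* Defs.v *)
From HB Require Import structures.
From mathcomp Require Import all_boot all_order all_algebra all_fingroup.
From mathcomp Require Import finmap.
From mathcomp Require Import monalg.

Set Implicit Arguments.
Unset Strict Implicit.
Unset Printing Implicit Defensive.

Import GRing.Theory.
Local Open Scope ring_scope.

(* T(F^{Q0}) = \bigoplus_k (F^{Q0})^{\otimes k}; the word [:: v1; ...; vk]
   is the basis tensor 1_{v1} \otimes ... \otimes 1_{vk}, the empty word is 1,
   and the algebra product is the tensor product. *)
Definition tensor (F : fieldType) (Q0 : finType) := {malg F[{fmonom Q0}]}.

Definition tv (F : fieldType) (Q0 : finType) (v : Q0) : tensor F Q0 :=
  << fmu v >>.

Definition Tprod (F : fieldType) (Q0 : finType) (s : seq Q0) : tensor F Q0 :=
  \prod_(u <- s) tv F u.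

Definition Sym (F : fieldType) (Q0 : finType) (s : seq Q0) : tensor F Q0 :=
  \sum_(sigma : 'S_(size s)) \prod_(i < size s) tv F (tnth (in_tuple s) (sigma i)).

(* A directed tensor-labeled hypergraph (Q0,Q1,beta) is given by the values
   beta(1_e) = (A_e, B_e) on the basis of F^{Q1} (beta is their linear
   extension). *)
Definition hgraph (F : fieldType) (Q0 Q1 : finType) :=
  Q1 -> tensor F Q0 * tensor F Q0.

Section Hypergraph.
Variables (F : fieldType) (Q0 Q1 : finType) (beta : hgraph F Q0 Q1).

Definition Ae e := (beta e).1.
Definition Be e := (beta e).2.

Definition dbeta (x : {ffun Q1 -> F^o}) : tensor F Q0 :=
  \sum_(e : Q1) (x e : F) *: (Be e - Ae e).

Definition inZ (x : {ffun Q1 -> F^o}) : Prop := dbeta x = 0.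

Definition Vseq : seq (tensor F Q0) :=
  undup ([seq Ae e | e <- enum Q1] ++ [seq Be e | e <- enum Q1]).

Definition Vmacro := seq_sub Vseq.

Lemma Ae_in e : Ae e \in Vseq.
Proof. by rewrite mem_undup mem_cat; apply/orP; left; apply: map_f; rewrite mem_enum. Qed.

Lemma Be_in e : Be e \in Vseq.
Proof. by rewrite mem_undup mem_cat; apply/orP; right; apply: map_f; rewrite mem_enum. Qed.

Definition msrc e : Vmacro := SeqSub (Ae_in e).
Definition mtgt e : Vmacro := SeqSub (Be_in e).

Definition madj : rel Vmacro := fun v w =>
  [exists e : Q1, ((msrc e == v) && (mtgt e == w)) || ((msrc e == w) && (mtgt e == v))].

Definition c_macro : nat := n_comp madj (@predT Vmacro).

Definition Bmacro (x : {ffun Q1 -> F^o}) : {ffun Vmacro -> F^o} :=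
  \sum_(e : Q1) (x e : F) *:
     ([ffun w => ((w == mtgt e)%:R : F^o)] - [ffun w => ((w == msrc e)%:R : F^o)]).

Definition phihat (y : {ffun Vmacro -> F^o}) : tensor F Q0 :=
  \sum_(w : Vmacro) (y w : F) *: ssval w.

End Hypergraph.

(* "the subspace described by P has dimension n": P is exactly the span of
   some free family of n vectors *)
Definition has_dim (F : fieldType) (V : vectType F) (P : V -> Prop) (n : nat) :=
  exists b : n.-tuple V, free b /\ forall x, x \in <<b>>%VS <-> P x.

Definition dimZ_is (F : fieldType) (Q0 Q1 : finType) (beta : hgraph F Q0 Q1) n :=
  has_dim (inZ beta) n.

Definition delta_is (F : fieldType) (Q0 Q1 : finType) (beta : hgraph F Q0 Q1) n :=
  has_dim (fun y : {ffun Vmacro beta -> F^o} =>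
             (exists x, y = Bmacro beta x) /\ phihat y = 0) n.

Section Standard.
Variables (F : fieldType) (Q0 Q1 : finType) (beta : hgraph F Q0 Q1).

Definition std1 := exists psi : Q1 -> {set Q0}, forall e,
  (exists v, psi e = [set v] /\
     beta e = ((2%:R : F) *: (tv F v * tv F v), 1))
  \/ (exists u v, u != v /\ psi e = [set u; v] /\
     beta e = (tv F u * tv F v + tv F v * tv F u, 1)).

Definition std2 := exists s t : Q1 -> Q0, forall e,
  beta e = (tv F (s e), tv F (t e)).

(* (3) multisets of size k >= 1 (listed in any order) *)
Definition std3 := exists m : Q1 -> seq Q0, forall e,
  (0 < size (m e))%N /\ beta e = (Sym F (m e), 1).

Definition std4 := exists m : Q1 -> seq Q0, forall e,
  (0 < size (m e))%N /\ beta e = (Tprod F (m e), 1).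

Definition std5 := exists m1 m2 : Q1 -> seq Q0, forall e,
  (0 < size (m1 e))%N /\ (0 < size (m2 e))%N /\
  beta e = (Sym F (m1 e), Sym F (m2 e)).

Definition std6 := exists m1 m2 : Q1 -> seq Q0, forall e,
  (0 < size (m1 e))%N /\ (0 < size (m2 e))%N /\
  beta e = (Tprod F (m1 e), Tprod F (m2 e)).

Definition single_standard := std1 \/ std2 \/ std3 \/ std4 \/ std5 \/ std6.

End Standard.

(* Main.v *)
Require Import Defs.
From HB Require Import structures.
From mathcomp Require Import all_boot all_order all_algebra all_fingroup.
From mathcomp Require Import finmap monalg.
From mathcomp Require Import zify.
Import GRing.Theory.
Local Open Scope ring_scope.
Section S.
Variables (F : fieldType) (Q0 : finType).
Lemma fm_cons (a : Q0) (s : seq Q0) : mmul (fmu a) (FMonom s) = FMonom (a :: s).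
Proof. by apply: val_inj; rewrite /= fmM fmU. Qed.
Lemma one_malg : (1 : tensor F Q0) = << FMonom [::] >>.
Proof. rewrite -mpolyC1E; congr (<< _ *g _ >>); by apply: val_inj; rewrite /= fm1. Qed.
Lemma TprodE (s : seq Q0) : Tprod F s = << FMonom s >>.
Proof.
elim: s => [|a s IH]; first by rewrite /Tprod big_nil one_malg.
rewrite /Tprod big_cons -/(Tprod F s) IH /tv malgM_def fgmulUU mulr1 fm_cons //.
Qed.
End S.

Set Implicit Arguments.
Unset Strict Implicit.
Section S.
Variables (F : fieldType) (Q0 : finType).
Definition ps {s : seq Q0} (sg : 'S_(size s)) :=
  [seq tnth (in_tuple s) (sg i) | i <- enum 'I_(size s)].
Lemma Sym_sum s : Defs.Sym F s = \sum_(sg : 'S_(size s)) << FMonom (ps sg) >>.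
Proof.
apply: eq_bigr => sg _; rewrite -TprodE /Tprod big_map.
by rewrite enumT unlock.

Qed.
Definition SymG n (f : 'I_n -> Q0) : tensor F Q0 :=
  \sum_(sg : 'S_n) \prod_(i < n) tv F (f (sg i)).
Lemma SymG_perm n (f : 'I_n -> Q0) (s0 : 'S_n) :
  SymG (fun i => f (s0 i)) = SymG f.
Proof.
rewrite /SymG [RHS](reindex_inj (mulIg s0)) /=.
apply: eq_bigr => sg _; apply: eq_bigr => i _; by rewrite permM.
Qed.
Lemma SymG_cast n n' (f : 'I_n -> Q0) (f' : 'I_n' -> Q0) (e : n = n') :
  (forall i, f i = f' (cast_ord e i)) -> SymG f = SymG f'.
Proof.
case: n' / e f' => f' H; rewrite /SymG; apply: eq_bigr => sg _; apply: eq_bigr => i _.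
by rewrite H cast_ord_id.
Qed.
Lemma Sym_ps s (sg : 'S_(size s)) : Defs.Sym F (ps sg) = Defs.Sym F s.
Proof.
have e : size (ps sg) = size s by rewrite size_map size_enum_ord.
change (SymG (tnth (in_tuple (ps sg))) = SymG (tnth (in_tuple s))).
rewrite -(SymG_perm (tnth (in_tuple s)) sg).
apply: (@SymG_cast _ _ _ _ e) => i.
rewrite (tnth_nth (tnth (in_tuple s) (sg (cast_ord e i)))) /= /ps.
rewrite (nth_map (cast_ord e i)) ?size_enum_ord; last by move: (ltn_ord i); rewrite {2}e.
by rewrite -[X in nth _ _ X]/(nat_of_ord (cast_ord e i)) nth_ord_enum.
Qed.
Lemma Sym_disj (s s' : seq Q0) m : (Defs.Sym F s)@_m != 0 -> (Defs.Sym F s')@_m != 0 -> Defs.Sym F s = Defs.Sym F s'.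
Proof.
have key : forall t, (Defs.Sym F t)@_m != 0 -> exists sg : 'S_(size t), m = FMonom (ps sg).
  move=> t; rewrite Sym_sum raddf_sum /=.
  case: (pickP (fun sg : 'S_(size t) => FMonom (ps sg) == m)) => [sg /eqP <-|H].
    by move=> _; exists sg.
  by rewrite big1 ?eqxx // => sg _; rewrite mcoeffU H.
move=> /key [sg Hm] /key [sg' Hm'].
rewrite -(Sym_ps sg) -(Sym_ps sg'); congr (Defs.Sym F _).
by move: Hm; rewrite Hm' => -[].
Qed.
Lemma Sym_nil : Defs.Sym F (Q0:=Q0) [::] = 1.
Proof.
rewrite /Defs.Sym (eq_bigr (fun _ => 1)); last by move=> *; rewrite big_ord0.
by rewrite sumr_const card_Sn.
Qed.
Lemma Tprod_disj (s s' : seq Q0) m : (Tprod F s)@_m != 0 -> (Tprod F s')@_m != 0 -> Tprod F s = Tprod F s'.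
Proof.
rewrite !TprodE !mcoeffU => h1 h2.
have E1 : FMonom s = m by apply/eqP; apply: contraNT h1 => /negbTE ->.
have E2 : FMonom s' = m by apply/eqP; apply: contraNT h2 => /negbTE ->.
by rewrite E1 E2.
Qed.
End S.

Section G.
Variables (F : fieldType) (I : finType).
Lemma dim_ffunF : \dim (fullv : {vspace {ffun I -> F^o}}) = #|I|.
Proof. by rewrite dimvf /dim /= muln1. Qed.
Lemma ffunZE (a : F) (f : {ffun I -> F^o}) i : (a *: f) i = a * f i.
Proof. by rewrite ffunE. Qed.
Lemma sum_delta (V : lmodType F) (a : I) (f : I -> V) : \sum_i (i == a)%:R *: f i = f a.
Proof.
rewrite (bigD1 a) //= eqxx scale1r big1 ?addr0 // => i /negbTE ->; by rewrite scale0r.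
Qed.
End G.
Lemma sum_eq1 (F : fieldType) (T : finType) (a : T) : \sum_(i : T) ((i == a)%:R : F) = 1.
Proof.
rewrite (bigD1 a) //= eqxx big1 ?addr0 // => i /negbTE ->; by [].
Qed.

Section Gen.
Variables (F : fieldType) (Q1 W : finType) (s t : Q1 -> W).
Definition uv (w : W) : {ffun W -> F^o} := [ffun w' => ((w' == w)%:R : F^o)].
Definition Bg (x : {ffun Q1 -> F^o}) : {ffun W -> F^o} :=
  \sum_e x e *: (uv (t e) - uv (s e)).
Lemma Bg_ev x w : Bg x w = \sum_e x e * ((w == t e)%:R - (w == s e)%:R).
Proof. rewrite sum_ffunE; apply: eq_bigr => e _; by rewrite ffunZE !ffunE. Qed.
Lemma Bg_sum x : \sum_w (Bg x w : F) = 0.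
Proof.
under eq_bigr => w _ do rewrite Bg_ev.
rewrite exchange_big /=; apply: big1 => e _.
by rewrite -mulr_sumr sumrB !sum_eq1 subrr mulr0.
Qed.
Lemma Bg_lin : linear Bg.
Proof.
move=> a x y; rewrite /Bg scaler_sumr -big_split /=; apply: eq_bigr => e _.
by rewrite !ffunE scalerDl scalerA.
Qed.
Definition BgL : {linear {ffun Q1 -> F^o} -> {ffun W -> F^o}} :=
  HB.pack Bg (GRing.isLinear.Build _ _ _ _ Bg Bg_lin).
Definition Bgl := linfun BgL.
Lemma BglE x : Bgl x = Bg x.
Proof. by rewrite /Bgl lfunE. Qed.
Lemma Bg0 : Bg 0 = 0.
Proof. by rewrite /Bg big1 // => e _; rewrite ffunE scale0r. Qed.

Definition adj : rel W := fun v w =>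
  [exists e : Q1, ((s e == v) && (t e == w)) || ((s e == w) && (t e == v))].
Lemma adj_sym : symmetric adj.
Proof. by move=> v w; apply: eq_existsb => e; rewrite orbC. Qed.
Let csym := sym_connect_sym adj_sym.

Definition delta_e (e : Q1) : {ffun Q1 -> F^o} := [ffun e' => ((e' == e)%:R : F^o)].
Lemma Bg_delta e : Bg (delta_e e) = uv (t e) - uv (s e).
Proof.
rewrite /Bg (eq_bigr (fun e' => (e' == e)%:R *: (uv (t e') - uv (s e')))).
  by rewrite sum_delta.
by move=> e' _; rewrite ffunE.
Qed.
Lemma uv_edge e : uv (t e) - uv (s e) \in limg Bgl.
Proof. by rewrite -Bg_delta -BglE memv_img ?memvf. Qed.
Lemma uv_adj v w : adj v w -> uv v - uv w \in limg Bgl.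
Proof.
case/existsP => e /orP [] /andP [/eqP <- /eqP <-].
  by rewrite -opprB memvN uv_edge.
exact: uv_edge.
Qed.
Lemma uv_path x p : path adj x p -> uv x - uv (last x p) \in limg Bgl.
Proof.
elim: p x => [|y p IH] x /=; first by rewrite subrr mem0v.
case/andP => hxy hp.
have -> : uv x - uv (last y p) = (uv x - uv y) + (uv y - uv (last y p)).
  by rewrite addrA subrK.
by apply: memvD; [apply: uv_adj | apply: IH].
Qed.
Lemma uv_root w : uv w - uv (fingraph.root adj w) \in limg Bgl.
Proof.
have /connectP [p hp ->] := connect_root adj w.
exact: uv_path.
Qed.
Local Notation rt := (fingraph.root adj).
Definition RT := {r : W | rt r == r}.
Definition Sg (y : {ffun W -> F^o}) : {ffun RT -> F^o} :=
  [ffun r : RT => \sum_(w | rt w == val r) y w].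
Lemma Sg_lin : linear Sg.
Proof.
move=> a x y; apply/ffunP => r; rewrite !ffunE scaler_sumr -big_split /=; apply: eq_bigr => w _.
by rewrite !ffunE.
Qed.
Definition SgL : {linear {ffun W -> F^o} -> {ffun RT -> F^o}} :=
  HB.pack Sg (GRing.isLinear.Build _ _ _ _ Sg Sg_lin).
Definition Sgl := linfun SgL.
Lemma SglE x : Sgl x = Sg x.
Proof. by rewrite /Sgl lfunE. Qed.

Lemma sum_pred_eq (P : pred W) (a : W) : \sum_(i | P i) ((i == a)%:R : F) = (P a)%:R.
Proof.
rewrite big_mkcond (bigD1 a) //= eqxx big1 ?addr0; first by case: (P a).
by move=> i /negbTE ->; case: (P i).
Qed.

Lemma img_sub : (limg Bgl <= lker Sgl)%VS.
Proof.
apply/subvP => v /memv_imgP [x _ ->]; rewrite memv_ker SglE BglE; apply/eqP/ffunP => r.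
rewrite !ffunE.
under eq_bigr => w _ do rewrite Bg_ev.
rewrite exchange_big /=; apply: big1 => e _.
rewrite -mulr_sumr sumrB !sum_pred_eq.
have -> : rt (t e) = rt (s e).
  symmetry; apply/(fingraph.rootP csym); apply: connect1; apply/existsP; exists e; by rewrite !eqxx.
by rewrite subrr mulr0.
Qed.

Lemma lker_sub : (lker Sgl <= limg Bgl)%VS.
Proof.
apply/subvP => z; rewrite memv_ker SglE => /eqP hz.
have -> : z = \sum_w z w *: (uv w - uv (rt w)).
  apply/ffunP => v; rewrite sum_ffunE.
  have -> : \sum_w (z w *: (uv w - uv (rt w))) v = \sum_w z w * (v == w)%:R - \sum_(w | rt w == v) z w.
    rewrite [X in _ - X]big_mkcond /= -sumrB; apply: eq_bigr => w _.
    rewrite ffunZE !ffunE mulrBr; congr (_ - _).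
    by rewrite eq_sym; case: eqP => _; rewrite ?mulr1 ?mulr0.
  have -> : \sum_(w | rt w == v) z w = 0.
    have [hv|hv] := boolP (rt v == v).
      by have := congr1 (fun f : {ffun RT -> F^o} => f (exist _ v hv)) hz; rewrite !ffunE.
    apply: big1 => w /eqP hw; case/negP: hv; by rewrite -hw (fingraph.root_root csym).
  rewrite subr0 (bigD1 v) //= eqxx mulr1 big1 ?addr0 // => w hw.
  by rewrite eq_sym (negbTE hw) mulr0.
apply: memv_suml => w _; apply: memvZ; exact: uv_root.
Qed.

Lemma Sg_surj : limg Sgl = fullv.
Proof.
apply/eqP; rewrite eqEsubv subvf /=; apply/subvP => z _; apply/memv_imgP.
exists [ffun w => if insub w is Some r then z r else 0]; first exact: memvf.
rewrite SglE; apply/ffunP => r; rewrite ffunE.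
rewrite (bigD1 (val r)) ?(valP r) //= ffunE valK big1 ?addr0 // => w /andP [hw hne].
rewrite ffunE; case: insubP => [r' hr' hw'|//].
case/negP: hne; by rewrite -(eqP hw) (eqP hr').
Qed.

Lemma card_RT : #|{: RT}| = n_comp adj predT.
Proof. rewrite card_sig; apply: eq_card => x; by rewrite !inE andbT. Qed.

Lemma dim_rel : (\dim (lker Bgl) + #|W| = #|Q1| + n_comp adj predT)%N.
Proof.
have h1 := limg_ker_dim Bgl fullv; rewrite capfv dim_ffunF in h1.
have h2 := limg_ker_dim Sgl fullv; rewrite capfv Sg_surj !dim_ffunF card_RT in h2.
have e : limg Bgl = lker Sgl by apply/eqP; rewrite eqEsubv img_sub lker_sub.
rewrite e in h1; lia.
Qed.
End Gen.

Section Gen2.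
Variables (F : fieldType) (Q0 Q1 W : finType) (s t : Q1 -> W).
Variables (val : W -> tensor F Q0) (val_inj : injective val) (P : tensor F Q0 -> Prop).
Hypothesis HP : forall w, P (val w).
Hypothesis Hd : forall a b m, P a -> P b -> a@_m != 0 -> b@_m != 0 -> a = b.
Definition phig (y : {ffun W -> F^o}) : tensor F Q0 := \sum_w (y w : F) *: val w.
Lemma phig_Bg x : phig (Bg s t x) = \sum_e (x e : F) *: (val (t e) - val (s e)).
Proof.
rewrite /phig.
under eq_bigr => w _ do rewrite Bg_ev scaler_suml.
rewrite exchange_big /=; apply: eq_bigr => e _.
under eq_bigr => w _ do rewrite -scalerA.
rewrite -scaler_sumr; congr (_ *: _).
under eq_bigr => w _ do rewrite scalerBl.
by rewrite sumrB !sum_delta.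
Qed.
Lemma delta_gen x : phig (Bg s t x) = 0 -> Bg s t x = 0.
Proof.
move=> hphi.
have step1 : forall w, val w != 0 -> Bg s t x w = 0.
  move=> w hw; apply/eqP; apply: contraNT hw => hyw.
  apply/eqP/malgP => m; rewrite mcoeff0; apply/eqP/negPn/negP => hm.
  have := congr1 (mcoeff m) hphi; rewrite mcoeff0 /phig raddf_sum /= (bigD1 w) //= mcoeffZ.
  rewrite big1 ?addr0.
    by move/eqP; rewrite mulf_eq0 (negbTE hyw) (negbTE hm).
  move=> w' hw'; rewrite mcoeffZ.
  have [->|hm'] := eqVneq ((val w')@_m) 0; first by rewrite mulr0.
  by case/negP: hw'; apply/eqP/val_inj/(Hd (HP w') (HP w) hm' hm).
have step2 : forall w, Bg s t x w = 0.
  move=> w; have [hw|] := boolP (val w != 0); first exact: step1.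
  rewrite negbK => /eqP hw0.
  have := Bg_sum s t x; rewrite (bigD1 w) //= big1 ?addr0 // => w' hw'.
  apply: step1; apply: contra hw' => /eqP h; apply/eqP/val_inj; by rewrite h hw0.
by apply/ffunP => w; rewrite step2 ffunE.
Qed.
End Gen2.

Section Inst.
Variables (F : fieldType) (Q0 Q1 : finType) (beta : hgraph F Q0 Q1).
Local Notation W := (Vmacro beta).
Local Notation s := (msrc beta).
Local Notation t := (mtgt beta).
Local Notation val := (@ssval _ (Vseq beta)).
Lemma BmacroG x : Bmacro beta x = Bg s t x. Proof. by []. Qed.
Lemma phihatG y : phihat y = phig val y. Proof. by []. Qed.
Lemma dbetaG x : dbeta beta x = phig val (Bg s t x). Proof. by rewrite phig_Bg. Qed.
Lemma c_macroG : c_macro beta = n_comp (adj s t) predT. Proof. by []. Qed.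
Lemma vertex_shape (P : tensor F Q0 -> Prop) :
  (forall e, P (Ae beta e) /\ P (Be beta e)) -> forall w : W, P (val w).
Proof.
move=> H w; have := ssvalP w; rewrite mem_undup mem_cat => /orP [] /mapP [e _ ->]; by case: (H e).
Qed.
Lemma main_gen (P : tensor F Q0 -> Prop) :
  (forall e, P (Ae beta e) /\ P (Be beta e)) ->
  (forall a b m, P a -> P b -> a@_m != 0 -> b@_m != 0 -> a = b) ->
  delta_is beta 0 /\
  exists n : nat, dimZ_is beta n /\
    (n%:Z = (#|Q1|)%:Z - (#|{: Vmacro beta}|)%:Z + (c_macro beta)%:Z)%R.
Proof.
move=> HP Hd.
have HPw := vertex_shape HP.
have vinj : injective val := val_inj.
have D := delta_gen (s:=s) (t:=t) vinj HPw Hd.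
split.
  exists [tuple]; split; first exact: nil_free.
  move=> y; rewrite span_nil memv0; split.
    move/eqP => ->; split; first by exists 0; rewrite BmacroG Bg0.
    by rewrite phihatG /phig big1 // => w _; rewrite ffunE scale0r.
  by case=> [[x ->]]; rewrite BmacroG phihatG => /D ->.
exists (\dim (lker (Bgl F s t))); split.
  exists (vbasis (lker (Bgl F s t))); split; first exact: basis_free (vbasisP _).
  move=> x; rewrite (span_basis (vbasisP _)) memv_ker BglE /inZ dbetaG; split.
    by move/eqP ->; rewrite /phig big1 // => w _; rewrite ffunE scale0r.
  by move/D ->.
have h : (\dim (lker (Bgl F s t)) + #|{: Vmacro beta}| = #|Q1| + c_macro beta)%N := dim_rel F s t.
move: h; set n := \dim _; set V := #|{: Vmacro beta}|; set c := c_macro beta => h.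
lia.
Qed.
End Inst.

Section Shapes.
Variables (F : fieldType) (Q0 : finType).
Lemma U_supp (k m : {fmonom Q0}) : (<< k >> : tensor F Q0)@_m != 0 -> k = m.
Proof. by rewrite mcoeffU => h; apply/eqP; apply: contraNT h => /negbTE ->. Qed.
Lemma tvv (u v : Q0) : tv F u * tv F v = << FMonom [:: u; v] >> :> tensor F Q0.
Proof. by rewrite -(TprodE F Q0 [:: u; v]) /Tprod !big_cons big_nil mulr1. Qed.
Lemma tv1 (v : Q0) : tv F v = Tprod F [:: v].
Proof. by rewrite /Tprod big_cons big_nil mulr1. Qed.
Definition P1 (a : tensor F Q0) := a = 1 \/ exists u v, a = tv F u * tv F v + tv F v * tv F u.
Lemma P1_supp a m : P1 a -> a@_m != 0 ->
  (a = 1 /\ m = FMonom [::]) \/ exists u v, a = tv F u * tv F v + tv F v * tv F u /\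
    (m = FMonom [:: u; v] \/ m = FMonom [:: v; u]).
Proof.
case=> [->|[u [v ->]]] hm.
  left; split => //; symmetry; move: hm; rewrite (one_malg F Q0); exact: U_supp.
right; exists u, v; split => //.
move: hm; rewrite !tvv mcoeffD.
have [h|h] := eqVneq ((<< FMonom [:: u; v] >> : tensor F Q0)@_m) 0.
  by rewrite h add0r => /U_supp ->; right.
by move=> _; left; rewrite (U_supp h).
Qed.
Lemma P1_disj a b m : P1 a -> P1 b -> a@_m != 0 -> b@_m != 0 -> a = b.
Proof.
move=> Pa Pb ha hb.
have E : forall (x y : seq Q0), FMonom x = FMonom y -> x = y by move=> x y [].
case: (P1_supp Pa ha) => [[-> hm]|[u [v [-> hm]]]];
case: (P1_supp Pb hb) => [[-> hm']|[u' [v' [-> hm']]]].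
- reflexivity.
- exfalso. Timeout 10 (case: hm' => hm'; move: (E _ _ (etrans (esym hm) hm')) => //).
- exfalso. Timeout 10 (case: hm => hm; move: (E _ _ (etrans (esym hm) hm')) => //).
- have K : [:: u; v] = [:: u'; v'] \/ [:: u; v] = [:: v'; u'].
    case: hm => hm; case: hm' => hm'; move: (E _ _ (etrans (esym hm) hm')) => -[-> ->].
    + by left. + by right. + by right. + by left.
  by case: K => -[-> ->]; [reflexivity | exact: addrC].
Qed.
End Shapes.

Unset Implicit Arguments.
Set Strict Implicit.

Theorem theorem4p3 (F : fieldType) (Q0 Q1 : finType) (beta : hgraph F Q0 Q1) :
  single_standard beta ->
  delta_is beta 0 /\
  exists n : nat, dimZ_is beta n /\
    (n%:Z = (#|Q1|)%:Z - (#|{: Vmacro beta}|)%:Z + (c_macro beta)%:Z)%R.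
Proof.
have TPd : forall a b m, (exists s, a = Tprod F s) -> (exists s, b = Tprod F s) ->
    a@_m != 0 -> b@_m != 0 -> a = b :> tensor F Q0.
  by move=> a b m [s ->] [s' ->]; exact: Tprod_disj.
have SPd : forall a b m, (exists s, a = Defs.Sym F s) -> (exists s, b = Defs.Sym F s) ->
    a@_m != 0 -> b@_m != 0 -> a = b :> tensor F Q0.
  by move=> a b m [s ->] [s' ->]; exact: Sym_disj.
have T1 : Tprod F (Q0:=Q0) [::] = 1 by rewrite /Tprod big_nil.
case=> [[psi H]|[[s [t H]]|[[m H]|[[m H]|[[m1 [m2 H]]|[m1 [m2 H]]]]]]].
- apply: (main_gen (P := @P1 F Q0)); last exact: P1_disj.
  move=> e; rewrite /Ae /Be; case: (H e) => [[v [_ ->]]|[u [v [_ [_ ->]]]]] /=; split; try by left.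
    by right; exists v, v; rewrite scaler_nat mulr2n.
  by right; exists u, v.
- apply: (main_gen (P := fun a => exists s, a = Tprod F s)); last exact: TPd.
  move=> e; rewrite /Ae /Be H /=; split; by eexists; apply: tv1.
- apply: (main_gen (P := fun a => exists s, a = Defs.Sym F s)); last exact: SPd.
  move=> e; rewrite /Ae /Be; case: (H e) => _ -> /=; split; first by eexists.
  by exists [::]; rewrite Sym_nil.
- apply: (main_gen (P := fun a => exists s, a = Tprod F s)); last exact: TPd.
  move=> e; rewrite /Ae /Be; case: (H e) => _ -> /=; split; first by eexists.
  by exists [::]; rewrite T1.
- apply: (main_gen (P := fun a => exists s, a = Defs.Sym F s)); last exact: SPd.
  move=> e; rewrite /Ae /Be; case: (H e) => _ [_ ->] /=; split; by eexists.
- apply: (main_gen (P := fun a => exists s, a = Tprod F s)); last exact: TPd.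
  move=> e; rewrite /Ae /Be; case: (H e) => _ [_ ->] /=; split; by eexists.
Qed.
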